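(* For $0<u<v<1$ and all $k\in\mathbb R$: (i) $(\mathcal E^c_u)'(k-)-(v-u)\le(\mathcal E^c_v)'(k-)\le(\mathcal E^c_u)'(k-)$; (ii) $(\mathcal E^c_u)'(k+)-(v-u)\le(\mathcal E^c_v)'(k+)\le(\mathcal E^c_u)'(k+)$.
   Context: Let $\mu,\nu$ be probability measures on $\mathbb R$ with finite first moments and $\mu\le_{cx}\nu$. Put $P_\eta(k)=\int(k-x)^+\eta(dx)$, $D=P_\nu-P_\mu$, and assume $\{k:D(k)>0\}$ is an interval. Let $G$ be the left-continuous quantile function of $\mu$. For $u\in(0,1)$ let $\mu_u(A)=\mu(A\cap(-\infty,G(u)))+\big(u-\mu((-\infty,G(u)))\big)\delta_{G(u)}(A)$ and $\mathcal E_u=P_\nu-P_{\mu_u}$. $f^c$ is the largest convex function lying below $f$; primes with $\pm$ denote one-sided derivatives. *)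

(* Defs.v *)
From mathcomp Require Import all_boot all_order all_algebra.
From mathcomp Require Import all_classical all_reals all_analysis.
Set Implicit Arguments. Unset Strict Implicit. Unset Printing Implicit Defensive.
Import Order.TTheory GRing.Theory Num.Theory.
Import numFieldNormedType.Exports.
Local Open Scope ring_scope.
Local Open Scope classical_set_scope.

Section Defs.
Variable R : realType.

Definition convexR (g : R -> R) : Prop :=
  forall x y t : R, 0 <= t <= 1 ->
    g (t * x + (1 - t) * y) <= t * g x + (1 - t) * g y.

Definition convex_env (f : R -> R) (x : R) : R :=
  sup [set g x | g in [set g : R -> R | convexR g /\ forall y, g y <= f y]].

Definition left_deriv (f : R -> R) (k : R) : R :=
  lim ((f y - f k) / (y - k) @[y --> k^'-]).
Definition right_deriv (f : R -> R) (k : R) : R :=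
  lim ((f y - f k) / (y - k) @[y --> k^'+]).

Definition pos_part_put (k x : R) : R := Num.max (k - x) 0.

Definition put_fun (eta : probability R R) (k : R) : R :=
  fine (\int[eta]_x (pos_part_put k x)%:E)%E.

Definition cx_le (mu nu : probability R R) : Prop :=
  forall f : R -> R, convexR f ->
    (\int[mu]_x (f x)%:E <= \int[nu]_x (f x)%:E)%E.

Definition finite_first_moment (eta : probability R R) : Prop :=
  eta.-integrable [set: R] (fun x => x%:E).

Definition quantile (mu : probability R R) (u : R) : R :=
  inf [set x : R | (u%:E <= mu `]-oo, x])%E].

(* P_{mu_u}(k), where
   mu_u(A) = mu(A /\ (-oo, G u)) + (u - mu((-oo, G u))) delta_{G u}(A);
   the integral of (k - .)^+ against mu_u, written out. *)
Definition put_fun_sub (mu : probability R R) (u k : R) : R :=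
  fine (\int[mu]_(x in `]-oo, quantile mu u[) (pos_part_put k x)%:E)%E
  + (u - fine (mu `]-oo, quantile mu u[)) * pos_part_put k (quantile mu u).

Definition Dfun (mu nu : probability R R) (k : R) : R :=
  put_fun nu k - put_fun mu k.

Definition Efun (mu nu : probability R R) (u : R) (k : R) : R :=
  put_fun nu k - put_fun_sub mu u k.

End Defs.

(* Main.v *)
Require Import Defs.
From mathcomp Require Import all_boot all_order all_algebra.
From mathcomp Require Import all_classical all_reals all_analysis.
From mathcomp Require Import ring lra measurable_realfun.
Import Order.TTheory GRing.Theory Num.Theory.
Import numFieldNormedType.Exports.
Local Open Scope ring_scope.
Local Open Scope classical_set_scope.
Set Implicit Arguments. Unset Strict Implicit. Unset Printing Implicit Defensive.


Section ConvexFacts.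
Variable R : realType.
Implicit Types (F : R -> R).

Definition sl F (x y : R) := (F y - F x) / (y - x).

Lemma slC F x y : sl F x y = sl F y x.
Proof.
rewrite /sl; have [->|hxy] := eqVneq x y; first by [].
rewrite -[F x - F y]opprB -[x - y]opprB; by rewrite mulNr invrN mulrN opprK.
Qed.

Lemma div_le_div (p q d e : R) : 0 < d -> 0 < e -> p * e <= q * d -> p / d <= q / e.
Proof.
by move=> d0 e0 h; rewrite ler_pdivrMr // mulrAC ler_pdivlMr.
Qed.

Lemma convex3 F a b c : convexR F -> a < b -> b < c ->
  (c - a) * F b <= (c - b) * F a + (b - a) * F c.
Proof.
move=> cF ab bc.
have ca : 0 < c - a by lra.
pose t := (c - b) / (c - a).
have t01 : 0 <= t <= 1.
  apply/andP; split; first by rewrite /t divr_ge0 //; lra.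
  by rewrite /t ler_pdivrMr // mul1r; lra.
have := cF a c t t01.
have -> : t * a + (1 - t) * c = b.
  rewrite /t; field; lra.
move=> h.
have h2 := ler_wpM2l (ltW ca) h.
apply: (le_trans h2); rewrite /t le_eqVlt; apply/orP; left; apply/eqP; field; lra.
Qed.

Lemma sl_le1 F a b c : convexR F -> a < b -> b < c -> sl F a b <= sl F a c.
Proof.
move=> cF ab bc; have h := convex3 cF ab bc.
rewrite /sl; apply: div_le_div; try lra; nra.
Qed.

Lemma sl_le2 F a b c : convexR F -> a < b -> b < c -> sl F a c <= sl F b c.
Proof.
move=> cF ab bc; have h := convex3 cF ab bc.
rewrite /sl; apply: div_le_div; try lra; nra.
Qed.


Section Deriv.
Variable F : R -> R.
Hypothesis cF : convexR F.

Lemma sl_mono k y z : y < z -> y != k -> z != k -> sl F k y <= sl F k z.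
Proof.
move=> yz yk zk.
have [ky|yk'] := ltrP k y.
  by apply: sl_le1.
have yk2 : y < k by rewrite lt_neqAle yk yk'.
have [kz|zk'] := ltrP k z.
  rewrite slC; apply: (le_trans (sl_le1 cF yk2 kz)); exact: sl_le2.
have zk2 : z < k by rewrite lt_neqAle zk zk'.
by rewrite slC [sl F k z]slC; apply: sl_le2.
Qed.

Lemma sl_mono_le k y z : y <= z -> y != k -> z != k -> sl F k y <= sl F k z.
Proof.
rewrite le_eqVlt => /orP[/eqP -> //|yz]; exact: sl_mono.
Qed.

Lemma cvg_sl_right k : cvg (sl F k y @[y --> k^'+]).
Proof.
apply: nondecreasing_at_right_is_cvgr.
- near=> x => y z; rewrite !in_itv /= => /andP[ky _] /andP[kz _] yz.
  apply: sl_mono_le => //; [by rewrite gt_eqF|by rewrite gt_eqF].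
- near=> x; exists (sl F k (k-1)) => _ [y /= + <-]; rewrite in_itv /= => /andP[ky _].
  apply: sl_mono_le; [lra|rewrite lt_eqF //; lra|by rewrite gt_eqF].
Unshelve. all: by end_near.
Qed.

Lemma cvg_sl_left k : cvg (sl F k y @[y --> k^'-]).
Proof.
apply: nondecreasing_at_left_is_cvgr.
- near=> x => y z; rewrite !in_itv /= => /andP[_ yk] /andP[_ zk] yz.
  apply: sl_mono_le => //; [by rewrite lt_eqF|by rewrite lt_eqF].
- near=> x; exists (sl F k (k+1)) => _ [y /= + <-]; rewrite in_itv /= => /andP[_ yk].
  apply: sl_mono_le; [lra|by rewrite lt_eqF|rewrite gt_eqF //; lra].
Unshelve. all: by end_near.
Qed.

Definition RD k := lim (sl F k y @[y --> k^'+]).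
Definition LD k := lim (sl F k y @[y --> k^'-]).

Lemma RD_sl k y : k < y -> RD k <= sl F k y.
Proof.
move=> ky; apply: limr_le; first exact: cvg_sl_right.
near=> z; apply: sl_mono_le.
- by apply: ltW; near: z; apply: nbhs_right_lt.
- by rewrite gt_eqF //; near: z; apply: nbhs_right_gt.
- by rewrite gt_eqF.
Unshelve. all: by end_near.
Qed.

Lemma RD_sub k y : k <= y -> F k + RD k * (y - k) <= F y.
Proof.
rewrite le_eqVlt => /orP[/eqP ->|ky]; first by rewrite subrr mulr0 addr0.
have := RD_sl ky; rewrite /sl ler_pdivlMr; last by lra.
lra.
Qed.

Lemma RD_ge k m : (forall y, k < y -> F k + m * (y - k) <= F y) -> m <= RD k.
Proof.
move=> h; apply: limr_ge; first exact: cvg_sl_right.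
near=> z; have kz : k < z by near: z; apply: nbhs_right_gt.
have := h z kz => hz; rewrite /sl ler_pdivlMr; lra.
Unshelve. all: by end_near.
Qed.

Lemma LD_sl k y : y < k -> sl F k y <= LD k.
Proof.
move=> yk; apply: limr_ge; first exact: cvg_sl_left.
near=> z; apply: sl_mono_le.
- by apply: ltW; near: z; apply: nbhs_left_gt.
- by rewrite lt_eqF.
- by rewrite lt_eqF //; near: z; apply: nbhs_left_lt.
Unshelve. all: by end_near.
Qed.

Lemma LD_sub k y : y <= k -> F k + LD k * (y - k) <= F y.
Proof.
rewrite le_eqVlt => /orP[/eqP ->|yk]; first by rewrite subrr mulr0 addr0.
have := LD_sl yk; rewrite /sl ler_ndivrMr; last by lra.
lra.
Qed.

Lemma LD_le k m : (forall y, y < k -> F k + m * (y - k) <= F y) -> LD k <= m.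
Proof.
move=> h; apply: limr_le; first exact: cvg_sl_left.
near=> z; have zk : z < k by near: z; apply: nbhs_left_lt.
have := h z zk => hz; rewrite /sl ler_ndivrMr; lra.
Unshelve. all: by end_near.
Qed.

Lemma LD_RD k : LD k <= RD k.
Proof.
apply: RD_ge => y ky.
have h1 : LD k <= sl F k y.
  apply: limr_le; first exact: cvg_sl_left.
  near=> z; apply: sl_mono_le.
  - apply: ltW; apply: (@lt_trans _ _ k) => //; near: z; apply: nbhs_left_lt.
  - by rewrite lt_eqF //; near: z; apply: nbhs_left_lt.
  - by rewrite gt_eqF.
move: h1; rewrite /sl ler_pdivlMr; lra.
Unshelve. all: by end_near.
Qed.

End Deriv.

Lemma small_lin (d A B : R) : 0 < d ->
  (forall e, 0 < e -> e < d -> B <= A * e) -> B <= 0.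
Proof.
move=> d0 h; rewrite leNgt; apply/negP => B0.
have [A0|A0] := lerP A 0.
  have := h (d / 2); nra.
pose e := Num.min (d / 2) (B / (2 * A)).
have e1 : e <= d / 2 by rewrite /e ge_min lexx.
have e2 : e <= B / (2 * A) by rewrite /e ge_min lexx orbT.
have e0 : 0 < e by rewrite /e lt_min; apply/andP; split;
  [lra|apply: divr_gt0; lra].
have := h e e0 ltac:(lra).
have : A * e <= A * (B / (2 * A)) by apply: ler_wpM2l; lra.
have -> : A * (B / (2 * A)) = B / 2 by field; lra.
lra.
Qed.

Lemma line_convex (a b : R) : convexR (fun y => a + b * y).
Proof.
move=> x y t _; rewrite le_eqVlt; apply/orP; left; apply/eqP; ring.
Qed.

Section Env.
Variable g : R -> R.
Hypothesis hm : exists p, convexR p /\ forall y, p y <= g y.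

Lemma env_ub x : convex_env g x <= g x.
Proof.
apply: ge_sup.
  by case: hm => p hp; exists (p x), p.
by move=> _ [p [_ hp] <-]; exact: hp.
Qed.

Lemma env_lb p : convexR p -> (forall y, p y <= g y) -> forall x, p x <= convex_env g x.
Proof.
move=> cp hp x; apply: ub_le_sup.
  by exists (g x) => _ [q [_ hq] <-]; exact: hq.
by exists p.
Qed.

Lemma env_convex : convexR (convex_env g).
Proof.
move=> x y t ht; apply: ge_sup.
  by case: hm => p hp; exists (p (t * x + (1 - t) * y)), p.
move=> _ [p [cp hp] <-]; apply: le_trans (cp x y t ht) _.
case/andP: ht => t0 t1.
apply: lerD; apply: ler_wpM2l; try lra; exact: env_lb.
Qed.

End Env.

Section Compare.
Variables g1 g2 : R -> R.
Variable c : R.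
Hypothesis m1 : exists p, convexR p /\ forall y, p y <= g1 y.
Hypothesis m2 : exists p, convexR p /\ forall y, p y <= g2 y.
Hypothesis hphi : forall x y, x <= y -> c * (y - x) <= (g2 y - g1 y) - (g2 x - g1 x).

Let G1 := convex_env g1.
Let G2 := convex_env g2.
Let cG1 : convexR G1 := env_convex m1.
Let cG2 : convexR G2 := env_convex m2.

Lemma caseE x : LD G1 x + c <= RD G2 x.
Proof.
have LR1 := LD_RD cG1 x; have LR2 := LD_RD cG2 x.
have [h|h] := lerP (G2 x) (G1 x + (g2 x - g1 x)).
- suff: RD G1 x + c <= RD G2 x by lra.
  set m := RD G1 x + c.
  have [hm'|hm'] := lerP m (LD G2 x); first by lra.
  apply: RD_ge => // y xy.
  suff : (G2 x - m * x) + m * y <= G2 y by lra.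
  suff H : forall z, (G2 x - m * x) + m * z <= g2 z.
    exact: (env_lb (@line_convex (G2 x - m * x) m) H y).
  move=> z.
  have [xz|zx] := lerP x z.
  + have e1 := env_ub m1 z; have e2 := RD_sub cG1 xz; have e3 := hphi xz.
    rewrite /m; fold G1 in e1 |- *; nra.
  + have e1 := env_ub m2 z; have e2 := LD_sub cG2 (ltW zx).
    fold G2 in e1 |- *; nra.
- suff: LD G1 x <= LD G2 x - c by lra.
  set m := LD G2 x - c.
  have [hm'|hm'] := lerP (RD G1 x) m; first by lra.
  apply: LD_le => // y yx.
  suff : (G1 x - m * x) + m * y <= G1 y by lra.
  suff H : forall z, (G1 x - m * x) + m * z <= g1 z.
    exact: (env_lb (@line_convex (G1 x - m * x) m) H y).
  move=> z.
  have [zx|xz] := lerP z x.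
  + have e1 := env_ub m2 z; have e2 := LD_sub cG2 zx; have e3 := hphi zx.
    rewrite /m; fold G2 in e1 |- *; nra.
  + have e1 := env_ub m1 z; have e2 := RD_sub cG1 (ltW xz).
    fold G1 in e1 |- *; nra.
Qed.

Lemma RD_mono k : RD G1 k + c <= RD G2 k.
Proof.
set m := RD G1 k + c.
apply: RD_ge => // z kz.
suff : G2 k + m * (z - k) - G2 z <= 0 by lra.
apply: (@small_lin (z - k) (m - RD G2 k)); first lra.
move=> e e0 ez.
set x := k + e.
have kx : k < x by rewrite /x; lra.
have xz : x < z by rewrite /x; lra.
have h1 := RD_sl cG1 kx.
have h2 := LD_sl cG1 (y:=k) kx.
rewrite slC in h2.
have h3 := caseE x.
have h4 := RD_sub cG2 (ltW xz).
have h5 := RD_sub cG2 (ltW kx).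
have h6 : m <= RD G2 x by rewrite /m; lra.
have h7 : m * (z - x) <= RD G2 x * (z - x) by apply: ler_wpM2r; lra.
have -> : e = x - k by rewrite /x; ring.
lra.
Qed.

Lemma LD_mono k : LD G1 k + c <= LD G2 k.
Proof.
set m := LD G2 k - c.
suff : LD G1 k <= m by rewrite /m; lra.
apply: LD_le => // w wk.
suff : G1 k + m * (w - k) - G1 w <= 0 by lra.
apply: (@small_lin (k - w) (LD G1 k - m)); first lra.
move=> e e0 ew.
set x := k - e.
have xk : x < k by rewrite /x; lra.
have wx : w < x by rewrite /x; lra.
have h1 := LD_sub cG1 (ltW wx).
have h2 := caseE x.
have h3 := RD_sub cG2 (ltW xk).
have h4 := LD_sub cG2 (ltW xk).
have h5 := LD_sub cG1 (ltW xk).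
have h6 : RD G2 x <= LD G2 k.
  rewrite -(@ler_pM2r _ (k - x)); last by lra.
  lra.
have h7 : LD G1 x <= m by rewrite /m; lra.
have h8 : m * (w - x) <= LD G1 x * (w - x) by apply: ler_wnM2r; lra.
have -> : e = k - x by rewrite /x; ring.
lra.
Qed.

End Compare.
End ConvexFacts.


Section Quant.
Variable R : realType.
Variable mu : probability R R.

Definition pm (A : set R) : R := fine (mu A).

Lemma muE A : measurable A -> mu A = (pm A)%:E.
Proof. by move=> mA; rewrite /pm fineK // fin_num_measure. Qed.

Lemma pm_ge0 A : 0 <= pm A.
Proof. by rewrite /pm fine_ge0. Qed.

Lemma pm_le1 A : measurable A -> pm A <= 1.
Proof. by move=> mA; rewrite -lee_fin -muE // probability_le1. Qed.

Lemma pm_le A B : measurable A -> measurable B -> A `<=` B -> pm A <= pm B.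
Proof.
move=> mA mB AB; rewrite -lee_fin -!muE //; apply: le_measure => //; by rewrite inE.
Qed.

Lemma pmU A B : measurable A -> measurable B -> A `&` B = set0 ->
  pm (A `|` B) = pm A + pm B.
Proof.
move=> mA mB AB; apply/eqP; rewrite -eqe -muE ?EFinD -?muE //; last exact: measurableU.
by rewrite measureU.
Qed.

Definition Sq (w : R) := [set x : R | (w%:E <= mu `]-oo, x])%E].

Lemma Sq_up w x y : x <= y -> Sq w x -> Sq w y.
Proof.
move=> xy; rewrite /Sq /= => h; apply: (le_trans h); apply: le_measure; rewrite ?inE //.
by apply: subitvPr; rewrite bnd_simp.
Qed.

Lemma Sq_nonempty w : w < 1 -> exists x, Sq w x.
Proof.
move=> w1.
pose F n := (`]-oo, n%:R] : set R).
have hF : mu \o F @ \oo --> mu (\bigcup_n F n).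
  apply: nondecreasing_cvg_mu.
  - by move=> n; exact: measurable_itv.
  - by apply: bigcup_measurable => k _; exact: measurable_itv.
  move=> n m nm; apply/subsetPset => x; rewrite /F /= !in_itv /= => /le_trans; apply.
  by rewrite ler_nat.
have UF : \bigcup_n F n = setT.
  rewrite -subTset => t _ /=; exists (Num.truncn t).+1 => //=.
  by rewrite /F /= in_itv /= ltW // truncnS_gt.
rewrite UF probability_setT in hF.
have := @lte_lim _ (mu \o F) w.
case.
- move=> n m nm; apply: le_measure; rewrite ?inE //=; try exact: measurable_itv; move=> x; rewrite /F /= !in_itv /= => /le_trans; apply.
  by rewrite ler_nat.
- by apply/cvg_ex; exists 1%E.
- by rewrite (cvg_lim _ hF) // lte_fin.
- move=> N _ HN; exists N%:R; exact: (HN N (leqnn N)).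
Qed.


Lemma Sq_lbound w : 0 < w -> exists N : R, forall x, Sq w x -> N <= x.
Proof.
move=> w0.
pose F n := (`]-oo, - n%:R] : set R).
have hF : mu \o F @ \oo --> mu (\bigcap_n F n).
  apply: nonincreasing_cvg_mu.
  - by rewrite (le_lt_trans (probability_le1 _ _)) ?ltry //; exact: measurable_itv.
  - by move=> n; exact: measurable_itv.
  - by apply: bigcapT_measurable => k; exact: measurable_itv.
  move=> n m nm; apply/subsetPset => x; rewrite /F /= !in_itv /= => /le_trans; apply.
  by rewrite lerN2 ler_nat.
have IF : \bigcap_n F n = set0.
  rewrite -subset0 => t /(_ (Num.truncn (- t)).+1 I); rewrite /F /= in_itv /=.
  have := truncnS_gt (- t); lra.
rewrite IF measure0 in hF.
have := @cvgr_lt _ _ _ _ _ 0 (fine_cvg hF) w w0.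
case=> N _ HN; exists (- N%:R) => x Sx.
rewrite leNgt; apply/negP => xN.
have := HN N (leqnn N); rewrite /= -/(pm _) => h.
have : w <= pm (F N).
  rewrite -lee_fin -muE; last exact: measurable_itv.
  apply: (le_trans Sx); apply: le_measure; rewrite ?inE; try exact: measurable_itv.
  by move=> y; rewrite /F /= !in_itv /= => yx; apply: (le_trans yx); apply: ltW.
lra.
Qed.

Definition Gq (w : R) := quantile mu w.

Lemma Gq_lb w x : 0 < w -> Sq w x -> Gq w <= x.
Proof.
move=> w0 Sx; have [N HN] := Sq_lbound w0.
by apply: ge_inf => //; exists N.
Qed.

Lemma Gq_glb w x : w < 1 -> (forall y, Sq w y -> x <= y) -> x <= Gq w.
Proof.
move=> w1 h; have [y Sy] := Sq_nonempty w1.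
by apply: lb_le_inf => //; exists y.
Qed.

Lemma Gq_mono u v : 0 < u -> u <= v -> v < 1 -> Gq u <= Gq v.
Proof.
move=> u0 uv v1; apply: Gq_glb => // y Sy; apply: Gq_lb => //.
by rewrite /Sq /= in Sy *; apply: le_trans Sy; rewrite lee_fin.
Qed.


Lemma Q1 w : 0 < w -> w < 1 -> pm `]-oo, Gq w[ <= w.
Proof.
move=> w0 w1; set G := Gq w.
pose F n := (`]-oo, G - n.+1%:R^-1] : set R).
have UF : \bigcup_n F n = `]-oo, G[.
  apply/seteqP; split => y /=.
  - case=> n _; rewrite /F /= !in_itv /= => yG; apply: (le_lt_trans yG).
    by rewrite ltrBlDr ltrDl invr_gt0.
  - rewrite in_itv /= => yG; have [k hk] := ltr_add_invr yG.
    by exists k => //; rewrite /F /= in_itv /=; rewrite lerBrDr ltW.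
have hF : mu \o F @ \oo --> mu (\bigcup_n F n).
  apply: nondecreasing_cvg_mu.
  - by move=> n; exact: measurable_itv.
  - by apply: bigcup_measurable => k _; exact: measurable_itv.
  move=> n m nm; apply/subsetPset => x; rewrite /F /= !in_itv /= => /le_trans; apply.
  by rewrite lerD2l lerN2 lef_pV2 ?posrE // ler_nat ltnS.
rewrite UF in hF.
rewrite -lee_fin -muE; last exact: measurable_itv.
rewrite -(cvg_lim _ hF) //; apply: lime_le; first by apply/cvg_ex; eexists; exact: hF.
apply: nearW => n /=.
have : ~ Sq w (G - n.+1%:R^-1).
  move=> /(Gq_lb w0) h.
  have : G - n.+1%:R^-1 < G by rewrite ltrBlDr ltrDl invr_gt0 ltr0n.
  by rewrite ltNge h.
rewrite /Sq /= => /negP; rewrite -ltNge => /ltW.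
by rewrite /F.
Qed.

Lemma Q2 w : 0 < w -> w < 1 -> w <= pm `]-oo, Gq w].
Proof.
move=> w0 w1; set G := Gq w.
pose F n := (`]-oo, G + n.+1%:R^-1] : set R).
have IF : \bigcap_n F n = `]-oo, G].
  by rewrite (itvNycEbigcap false G).
have hF : mu \o F @ \oo --> mu (\bigcap_n F n).
  apply: nonincreasing_cvg_mu.
  - by rewrite (le_lt_trans (probability_le1 _ _)) ?ltry //; exact: measurable_itv.
  - by move=> n; exact: measurable_itv.
  - by apply: bigcapT_measurable => k; exact: measurable_itv.
  move=> n m nm; apply/subsetPset => x; rewrite /F /= !in_itv /= => /le_trans; apply.
  by rewrite lerD2l lef_pV2 ?posrE // ler_nat ltnS.
rewrite IF in hF.
rewrite -lee_fin -muE; last exact: measurable_itv.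
rewrite -(cvg_lim _ hF) //; apply: lime_ge; first by apply/cvg_ex; eexists; exact: hF.
apply: nearW => n /=.
have [N HN] := Sq_lbound w0.
have [y Sy] := Sq_nonempty w1.
have hinf : has_inf (Sq w) by split; [exists y|exists N].
have e0 : (0:R) < n.+1%:R^-1 by rewrite invr_gt0 ltr0n.
have [e Se eG] := inf_adherent e0 hinf.
apply: (le_trans Se); apply: le_measure; rewrite ?inE; try exact: measurable_itv.
move=> t; rewrite /F /= !in_itv /= => te; apply: (le_trans te); apply: ltW.
exact: eG.
Qed.

End Quant.


Ltac elim_max := repeat match goal with |- context [@Order.max _ _ ?a ?b] =>
  let H := fresh "H" in idtac;
  case: (lerP a b) => H end.

Section Ints.
Variable R : realType.

Lemma ff_ge0 (k t : R) : 0 <= pos_part_put k t.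
Proof. by rewrite /pos_part_put le_max lexx orbT. Qed.

Lemma ff_le (k t : R) : pos_part_put k t <= `|k| + `|t|.
Proof.
rewrite /pos_part_put; elim_max; first by rewrite addr_ge0.
apply: (le_trans (ler_norm _)); exact: ler_normB.
Qed.

Lemma ff_inc (x y t : R) : x <= y ->
  0 <= pos_part_put y t - pos_part_put x t <= y - x.
Proof. move=> xy; rewrite /pos_part_put; elim_max; apply/andP; split; lra. Qed.

Lemma ff_anti (x y s t : R) : x <= y -> s <= t ->
  pos_part_put y t - pos_part_put x t <= pos_part_put y s - pos_part_put x s.
Proof. move=> xy st; rewrite /pos_part_put; elim_max; lra. Qed.

Lemma ff_mono (x y t : R) : x <= y -> pos_part_put x t <= pos_part_put y t.
Proof. by move=> xy; have := ff_inc t xy; case/andP => h _; lra. Qed.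

Lemma ff_meas (k : R) : measurable_fun setT (fun x : R => (pos_part_put k x)%:E).
Proof.
apply/measurable_EFinP; rewrite /pos_part_put.
have hm : measurable_fun setT (fun x : R => k - x).
  by apply: measurable_funB => //; exact: measurable_id.
have := measurable_maxr hm (@measurable_cst _ _ R R setT (0:R)).
by apply: eq_measurable_fun => x _.
Qed.

Lemma ff_convex (k : R) : convexR (pos_part_put k).
Proof.
move=> x y t /andP[t0 t1].
have h1 := ff_ge0 k x; have h2 := ff_ge0 k y.
rewrite {1}/pos_part_put ge_max; apply/andP; split; rewrite /pos_part_put; elim_max; nra.
Qed.


Section IntEta.
Variable eta : probability R R.
Hypothesis heta : finite_first_moment eta.

Local Notation ff := pos_part_put.

Lemma ff_int k : eta.-integrable setT (fun x => (ff k x)%:E).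
Proof.
apply: (@le_integrable _ _ _ eta setT measurableT _ (fun x => (`|k|%:E + `|x%:E|)%E)).
- exact: ff_meas.
- move=> x _; rewrite abse_EFin -EFinD !abse_EFin lee_fin.
  rewrite (ger0_norm (ff_ge0 _ _)) ger0_norm; last by rewrite addr_ge0.
  exact: ff_le.
- apply: (@integrableD _ _ _ eta setT measurableT (EFin \o cst `|k|) (fun x => `|x%:E|%E)).
  + exact: finite_measure_integrable_cst.
  + exact: (integrable_abse heta).
Qed.

Lemma ff_intA k A : measurable A -> eta.-integrable A (fun x => (ff k x)%:E).
Proof. move=> mA; exact: (integrableS measurableT mA (@subsetT _ A) (ff_int k)). Qed.

Definition II A k := fine (\int[eta]_(x in A) (ff k x)%:E)%E.

Lemma IIE A k : measurable A -> (\int[eta]_(x in A) (ff k x)%:E)%E = (II A k)%:E.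
Proof. by move=> mA; rewrite /II fineK // integrable_fin_num // ff_intA. Qed.


Lemma ff_measR (k : R) : measurable_fun setT (ff k).
Proof. exact: (measurable_EFinP _ _).1 (ff_meas k). Qed.

Lemma Dl_meas (x y : R) A : measurable A ->
  measurable_fun A (fun t => (ff y t - ff x t)%:E).
Proof.
move=> mA; apply/measurable_EFinP; apply: measurable_funB;
  exact: measurable_funTS (ff_measR _).
Qed.

Lemma II_split A (x y : R) : measurable A -> x <= y ->
  (II A y)%:E = ((II A x)%:E + \int[eta]_(t in A) (ff y t - ff x t)%:E)%E.
Proof.
move=> mA xy; rewrite -!IIE // -ge0_integralD //.
- by apply: eq_integral => t _; rewrite -EFinD; congr EFin; ring.
- by move=> t _; rewrite lee_fin ff_ge0.
- exact: measurable_funTS (ff_meas _).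
- by move=> t _; rewrite lee_fin; case/andP: (ff_inc t xy).
- exact: Dl_meas.
Qed.

Lemma II_inc A (a x y : R) : measurable A -> (forall t, A t -> a <= t) -> x <= y ->
  II A y - II A x <= (ff y a - ff x a) * pm eta A.
Proof.
move=> mA hA xy.
suff : ((II A y)%:E <= (II A x)%:E + ((ff y a - ff x a) * pm eta A)%:E)%E.
  by rewrite -EFinD lee_fin; lra.
rewrite (II_split mA xy); apply: leeD2l.
rewrite EFinM -muE //.
rewrite -(@integral_cst _ _ _ eta _ mA).
apply: ge0_le_integral => //.
- by move=> t _; rewrite lee_fin; case/andP: (ff_inc t xy).
- exact: Dl_meas.
- by move=> t At; rewrite /= lee_fin; apply: ff_anti => //; exact: hA.
Qed.

Lemma II_pt0 A (a : R) (g : R -> R) : measurable A -> A a ->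
  measurable_fun A (fun t => (g t)%:E) -> (forall t, 0 <= g t) ->
  (((g a) * pm eta [set a])%:E <= \int[eta]_(t in A) (g t)%:E)%E.
Proof.
move=> mA Aa mg g0.
rewrite EFinM -muE //.
rewrite -(@integral_cst _ _ _ eta _ (measurable_set1 a)).
have -> : (\int[eta]_(x in [set a]) (cst (g a)%:E) x)%E = (\int[eta]_(t in [set a]) (g t)%:E)%E.
  by apply: eq_integral => t; rewrite inE /= => ->.
apply: (@ge0_subset_integral _ _ _ eta [set a] A (measurable_set1 a) mA) => //.
- by move=> t _; rewrite lee_fin.
- by move=> t ->.
Qed.

Lemma II_inc_lb A (a x y : R) : measurable A -> A a -> x <= y ->
  (ff y a - ff x a) * pm eta [set a] <= II A y - II A x.
Proof.
move=> mA Aa xy.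
suff : ((II A x)%:E + ((ff y a - ff x a) * pm eta [set a])%:E <= (II A y)%:E)%E.
  by rewrite -EFinD lee_fin; lra.
rewrite (II_split mA xy); apply: leeD2l.
apply: II_pt0 => //.
- exact: Dl_meas.
- by move=> t; case/andP: (ff_inc t xy).
Qed.

Lemma II_pt A (a k : R) : measurable A -> A a ->
  ff k a * pm eta [set a] <= II A k.
Proof.
move=> mA Aa; rewrite -lee_fin -IIE //; apply: II_pt0 => //.
- exact: measurable_funTS (ff_meas _).
- by move=> t; exact: ff_ge0.
Qed.

Lemma II_mono A (x y : R) : measurable A -> x <= y -> II A x <= II A y.
Proof.
move=> mA xy; have := II_split mA xy.
have : (0 <= \int[eta]_(t in A) (ff y t - ff x t)%:E)%E.
  by apply: integral_ge0 => t _; rewrite lee_fin; case/andP: (ff_inc t xy).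
move=> h0 h1; rewrite -lee_fin h1; rewrite -[X in (X <= _)%E]adde0; exact: leeD2l.
Qed.

Lemma II_U A B k : measurable A -> measurable B -> A `&` B = set0 ->
  II (A `|` B) k = II A k + II B k.
Proof.
move=> mA mB AB; apply/eqP; rewrite -eqe EFinD -!IIE //; last exact: measurableU.
rewrite ge0_integral_setU //.
- exact: measurable_funTS (ff_meas _).
- by move=> t _; rewrite lee_fin ff_ge0.
- exact/disj_set2P.
Qed.

End IntEta.
End Ints.


Section H.
Variable R : realType.
Local Notation ff := (@pos_part_put R).

Lemma setNyoU (a b : R) : a <= b -> `]-oo, b[ = `]-oo, a[ `|` `[a, b[.
Proof.
move=> ab; apply/seteqP; split => t /=; rewrite !in_itv /=.
- move=> tb; have [ta|ta2] := ltP t a; [by left|by right; apply/andP; split].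
- case=> [ta|/andP[ta2 tb]] //; exact: lt_le_trans ta ab.
Qed.

Lemma setNyoI (a b : R) : `]-oo, a[ `&` `[a, b[ = set0.
Proof.
apply/seteqP; split => t //=; rewrite !in_itv /= => -[ta /andP[ta2 _]].
by move: (lt_le_trans ta ta2); rewrite ltxx.
Qed.

Lemma setNycU (a : R) : `]-oo, a] = `]-oo, a[ `|` [set a].
Proof.
apply/seteqP; split => t /=; rewrite !in_itv /=.
- by rewrite le_eqVlt => /orP[/eqP ->|]; [right|left].
- by case=> [h|h]; [exact: ltW|rewrite h].
Qed.

Lemma setNy1I (a : R) : `]-oo, a[ `&` [set a] = set0.
Proof.
apply/seteqP; split => t //=; rewrite !in_itv /= => -[ta ta2].
by move: ta; rewrite ta2 ltxx.
Qed.

Lemma setT_split (a : R) : [set: R] = `]-oo, a[ `|` `[a, +oo[.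
Proof.
apply/seteqP; split => t //= _; rewrite !in_itv /= andbT.
by have [ta|ta2] := ltP t a; [left|right].
Qed.

Lemma setNyoyI (a : R) : `]-oo, a[ `&` `[a, +oo[ = set0.
Proof.
apply/seteqP; split => t //=; rewrite !in_itv /= andbT => -[ta ta2].
by move: (lt_le_trans ta ta2); rewrite ltxx.
Qed.

Variable mu : probability R R.
Hypothesis hmu : finite_first_moment mu.

Lemma PsubE w k : put_fun_sub mu w k =
  II mu `]-oo, Gq mu w[ k + (w - pm mu `]-oo, Gq mu w[) * ff k (Gq mu w).
Proof. by []. Qed.

Lemma h_inc u v x y : 0 < u -> u < v -> v < 1 -> x <= y ->
  0 <= (put_fun_sub mu v y - put_fun_sub mu u y) - (put_fun_sub mu v x - put_fun_sub mu u x)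
  <= (v - u) * (y - x).
Proof.
move=> u0 uv v1 xy.
have u1 : u < 1 by lra.
have v0 : 0 < v by lra.
rewrite !PsubE.
set Gu := Gq mu u; set Gv := Gq mu v.
have GuGv : Gu <= Gv by apply: Gq_mono => //; lra.
set A := `]-oo, Gu[; set B := `[Gu, Gv[.
have mA : measurable A by exact: measurable_itv.
have mB : measurable B by exact: measurable_itv.
have eAv : `]-oo, Gv[ = A `|` B by exact: setNyoU.
have dAB : A `&` B = set0 by exact: setNyoI.
rewrite eAv !(II_U hmu _ mA mB dAB) (pmU mu mA mB dAB).
have q1u := Q1 mu u0 u1; have q1v := Q1 mu v0 v1.
rewrite -/Gu -/A in q1u; rewrite -/Gv eAv (pmU mu mA mB dAB) in q1v.
have q2u := Q2 mu u0 u1; rewrite -/Gu (setNycU Gu) (pmU mu mA (measurable_set1 Gu) (setNy1I Gu)) in q2u.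
have pB0 := pm_ge0 mu B; have pA0 := pm_ge0 mu A; have p10 := pm_ge0 mu [set Gu].
have /andP[d1 d2] : 0 <= ff y Gu - ff x Gu <= y - x by exact: ff_inc.
have /andP[d3 d4] : 0 <= ff y Gv - ff x Gv <= y - x by exact: ff_inc.
have d5 : ff y Gv - ff x Gv <= ff y Gu - ff x Gu by exact: ff_anti.
have hB : II mu B y - II mu B x <= (ff y Gu - ff x Gu) * pm mu B.
  apply: (II_inc hmu) => //.
  by move=> t; rewrite /B /= in_itv /= => /andP[].
have f2 : 0 <= (v - (pm mu A + pm mu B)) * (ff y Gv - ff x Gv) by apply: mulr_ge0; lra.
rewrite (_ : forall (IAy IBy IAx IBx pA pB fvy fuy fvx fux : R),
  IAy + IBy + (v - (pA + pB)) * fvy - (IAy + (u - pA) * fuy) -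
  (IAx + IBx + (v - (pA + pB)) * fvx - (IAx + (u - pA) * fux)) =
  (IBy - IBx) + (v - (pA + pB)) * (fvy - fvx) - (u - pA) * (fuy - fux)); last by move=> *; ring.
move: hB f2 d1 d2 d3 d4 d5 q1u q1v q2u pA0 pB0 p10.
set IBd := II mu B y - II mu B x.
set Du := ff y Gu - ff x Gu.
set Dv := ff y Gv - ff x Gv.
move=> hB f2 d1 d2 d3 d4 d5 q1u q1v q2u pA0 pB0 p10.
apply/andP; split.
- have [GuGv'|GuGv'] := ltP Gu Gv.
  + have hB2 : Du * pm mu [set Gu] <= IBd.
      apply: (II_inc_lb hmu) => //.
      by rewrite /B /= in_itv /= lexx.
    have f1 : (u - pm mu A) * Du <= pm mu [set Gu] * Du by apply: ler_wpM2r; lra.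
    move: hB2 f1 f2; generalize IBd Du Dv (pm mu A) (pm mu B) (pm mu [set Gu]).
    move=> *; lra.
  + have eG : Gv = Gu by apply/eqP; rewrite eq_le GuGv'.
    have pB : pm mu B = 0.
      apply/eqP; rewrite eq_le pB0 andbT.
      have := pm_le mu mB (measurable0 : measurable (set0 : set R)) _.
      rewrite /pm measure0 /=; apply => t; rewrite /B /= in_itv /= eG.
      by case/andP => /le_lt_trans h /h; rewrite ltxx.
    have hm : 0 <= IBd by have := II_mono hmu mB xy; rewrite /IBd subr_ge0.
    have eD : Dv = Du by rewrite /Dv /Du eG.
    rewrite eD pB.
    have f3 : 0 <= (v - u) * Du by apply: mulr_ge0; lra.
    move: hm f3; generalize IBd Du (pm mu A).
    move=> *; lra.
- have [pu|pu] := lerP u (pm mu A + pm mu B).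
  + have f4 : (v - (pm mu A + pm mu B)) * Dv <= (v - (pm mu A + pm mu B)) * Du.
      by apply: ler_wpM2l; lra.
    have f5 : (v - u) * Du <= (v - u) * (y - x) by apply: ler_wpM2l; lra.
    move: hB f4 f5; generalize IBd Du Dv (pm mu A) (pm mu B).
    move=> *; lra.
  + have f4 : (pm mu A + pm mu B - u) * Du <= (pm mu A + pm mu B - u) * Dv.
      by apply: ler_wnM2l; lra.
    have f5 : (v - u) * Dv <= (v - u) * (y - x) by apply: ler_wpM2l; lra.
    move: hB f4 f5; generalize IBd Du Dv (pm mu A) (pm mu B).
    move=> *; lra.
Qed.

End H.


Section Final.
Variable R : realType.
Variables mu nu : probability R R.
Hypothesis hmu : finite_first_moment mu.
Hypothesis hnu : finite_first_moment nu.
Hypothesis hcx : cx_le mu nu.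

Lemma Psub_le w k : 0 < w -> w < 1 -> put_fun_sub mu w k <= put_fun mu k.
Proof.
move=> w0 w1; rewrite PsubE.
have -> : put_fun mu k = II mu setT k by [].
set G := Gq mu w.
set A := `]-oo, G[; set C := `[G, +oo[.
have mA : measurable A by exact: measurable_itv.
have mC : measurable C by exact: measurable_itv.
rewrite (setT_split G) (II_U hmu _ mA mC (setNyoyI G)).
have h1 : pos_part_put k G * pm mu [set G] <= II mu C k.
  by apply: (II_pt hmu) => //; rewrite /C /= in_itv /= lexx.
have q2 := Q2 mu w0 w1; rewrite -/G (setNycU G) (pmU mu mA (measurable_set1 G) (setNy1I G)) in q2.
have f1 : (w - pm mu A) * pos_part_put k G <= pm mu [set G] * pos_part_put k G.
  by apply: ler_wpM2r; [exact: ff_ge0|lra].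
move: h1 f1; generalize (II mu C k) (II mu A k) (pos_part_put k G) (pm mu [set G]) (pm mu A).
move=> *; lra.
Qed.

Lemma E_ge0 w k : 0 < w -> w < 1 -> 0 <= Efun mu nu w k.
Proof.
move=> w0 w1; rewrite /Efun.
have := Psub_le k w0 w1.
have : put_fun mu k <= put_fun nu k.
  have := hcx (@ff_convex R k).
  have -> : (\int[mu]_x (pos_part_put k x)%:E)%E = (II mu setT k)%:E by exact: IIE.
  have -> : (\int[nu]_x (pos_part_put k x)%:E)%E = (II nu setT k)%:E by exact: IIE.
  by rewrite lee_fin.
move: (put_fun mu k) (put_fun nu k) (put_fun_sub mu w k) => *; lra.
Qed.

End Final.

Unset Implicit Arguments.

Theorem lemma6p4 (R : realType) (mu nu : probability R R)
  (hmu : finite_first_moment mu) (hnu : finite_first_moment nu)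
  (hcx : cx_le mu nu)
  (hint : is_interval [set k : R | 0 < Dfun mu nu k])
  (u v : R) (hu : 0 < u) (huv : u < v) (hv : v < 1) :
  forall k : R,
    (left_deriv (convex_env (Efun mu nu u)) k - (v - u)
       <= left_deriv (convex_env (Efun mu nu v)) k
     /\ left_deriv (convex_env (Efun mu nu v)) k
       <= left_deriv (convex_env (Efun mu nu u)) k)
    /\
    (right_deriv (convex_env (Efun mu nu u)) k - (v - u)
       <= right_deriv (convex_env (Efun mu nu v)) k
     /\ right_deriv (convex_env (Efun mu nu v)) k
       <= right_deriv (convex_env (Efun mu nu u)) k).
Proof.
move=> k.
have mE : forall w, 0 < w -> w < 1 ->
    exists p, convexR p /\ forall y, p y <= Efun mu nu w y.
  move=> w w0 w1; exists (fun y => 0 + 0 * y); split; first exact: line_convex.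
  by move=> y; rewrite mul0r add0r; exact: E_ge0.
have mu_ := mE u hu (lt_trans huv hv).
have mv_ := mE v (lt_trans hu huv) hv.
have hup : forall x y, x <= y -> 0 * (y - x) <=
    (Efun mu nu u y - Efun mu nu v y) - (Efun mu nu u x - Efun mu nu v x).
  move=> x y xy; have /andP[h _] := h_inc hmu hu huv hv xy.
  rewrite /Efun mul0r; move: h.
  generalize (put_fun_sub mu v y) (put_fun_sub mu u y) (put_fun_sub mu v x)
    (put_fun_sub mu u x) (put_fun nu y) (put_fun nu x).
  by move=> *; lra.
have hlo : forall x y, x <= y -> (- (v - u)) * (y - x) <=
    (Efun mu nu v y - Efun mu nu u y) - (Efun mu nu v x - Efun mu nu u x).
  move=> x y xy; have /andP[_ h] := h_inc hmu hu huv hv xy.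
  rewrite /Efun mulNr; move: h.
  generalize (put_fun_sub mu v y) (put_fun_sub mu u y) (put_fun_sub mu v x)
    (put_fun_sub mu u x) (put_fun nu y) (put_fun nu x) ((v - u) * (y - x)).
  by move=> *; lra.
have L1 := LD_mono mu_ mv_ hlo k.
have L2 := LD_mono mv_ mu_ hup k.
have R1 := RD_mono mu_ mv_ hlo k.
have R2 := RD_mono mv_ mu_ hup k.
rewrite addr0 in L2; rewrite addr0 in R2.
split; split; [exact: L1|exact: L2|exact: R1|exact: R2].
Qed.
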